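(* Let $G$ be a concurrent game structure with a set $F\subseteq S$ of safe states, let $v$ be a valuation, and let $(\overline{G}_v,\overline{F})=\mathrm{TB}(G,v,F)$. Let $\overline{A}$ be the set of almost-sure winning states in $\overline{G}_v$ for $\mathrm{Safe}(\overline{F})$, and $\overline{\pi}_1$ a pure memoryless almost-sure winning strategy from $\overline{A}$ in $\overline{G}_v$. Let $\pi_1$ be a memoryless player-1 strategy in $G$ such that for every $s\in\overline{A}\cap S$, if $\overline{\pi}_1(s)=(s,A,B)$ then $\pi_1(s)\in\mathrm{OptSel}(v,s)$, $\mathrm{supp}(\pi_1(s))=A$ and $\mathrm{CountOpt}(v,s,\pi_1(s))=B$. Let $\pi_2$ be a pure memoryless player-2 strategy. If $\pi_2(s)\in\mathrm{CountOpt}(v,s,\pi_1(s))$ for all $s\in\overline{A}\cap S$, then $\Pr_s^{\pi_1,\pi_2}(\mathrm{Safe}(F))=1$ for all $s\in\overline{A}\cap S$.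
   Context: Concurrent game structure $G=(S,M,\Gamma_1,\Gamma_2,\delta)$: finite states, finite moves, nonempty move sets $\Gamma_i(s)$, $\delta(s,a_1,a_2)\in\mathrm{Distr}(S)$ (simultaneous independent moves), $\mathrm{Dest}(s,a_1,a_2)=\mathrm{supp}\,\delta(s,a_1,a_2)$. A selector at $s$ for player $i$ is a distribution on $\Gamma_i(s)$; memoryless strategies play a fixed selector at each state; pure means point masses. $\mathrm{Safe}(F)$: plays staying in $F$ forever. A valuation is $v:S\to[0,1]$. $\mathrm{Pre}_{\xi_1,\xi_2}(v)(s)=\sum_{a,b}\sum_tv(t)\delta(s,a,b)(t)\xi_1(s)(a)\xi_2(s)(b)$; $\mathrm{Pre}_{\xi_1,b}$ with player 2 playing $b$; $\mathrm{Pre}_{1:\xi_1}(v)(s)=\inf_{\xi_2}\mathrm{Pre}_{\xi_1,\xi_2}(v)(s)$; $\mathrm{Pre}_1(v)(s)=\sup_{\xi_1}\mathrm{Pre}_{1:\xi_1}(v)(s)$. $\mathrm{OptSel}(v,s)=\{\xi_1:\mathrm{Pre}_{1:\xi_1}(v)(s)=\mathrm{Pre}_1(v)(s)\}$; $\mathrm{CountOpt}(v,s,\xi_1)=\{b\in\Gamma_2(s):\mathrm{Pre}_{\xi_1,b}(v)(s)=\mathrm{Pre}_1(v)(s)\}$; $\mathrm{OptSelCount}(v,s)$ = pairs $(A,B)$ such that some $\xi_1\in\mathrm{OptSel}(v,s)$ has support $A$ and $\mathrm{CountOpt}(v,s,\xi_1)=B$. $\mathrm{TB}(G,v,F)=(\overline{G}_v,\overline{F})$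 is the turn-based stochastic game (player $i$ chooses the successor at its states; random states choose uniformly among successors) with player-1 states $S$, player-2 states $(s,A,B)$ for $(A,B)\in\mathrm{OptSelCount}(v,s)$, random states $(s,A,b)$ for such $(A,B)$ and $b\in B$, edges $s\to(s,A,B)$, $(s,A,B)\to(s,A,b)$ for $b\in B$, $(s,A,b)\to t$ for $t\in\bigcup_{a\in A}\mathrm{Dest}(s,a,b)$; $\overline{F}=F\cup\{(s,A,B):s\in F\}\cup\{(s,A,b):s\in F\}$. A state is almost-sure winning for $\mathrm{Safe}(\overline{F})$ if player 1 has a strategy ensuring $\mathrm{Safe}(\overline{F})$ with probability 1 from it against all player-2 strategies; an almost-sure winning strategy from $\overline{A}$ does so from every state of $\overline{A}$. *)

(* Defs.v *)
From HB Require Import structures.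
From mathcomp Require Import all_boot all_order all_algebra.
From mathcomp Require Import classical_sets reals.
Set Implicit Arguments. Unset Strict Implicit. Unset Printing Implicit Defensive.
Import Order.TTheory GRing.Theory Num.Theory.
Local Open Scope ring_scope.

Section CGS.
Variable R : realType.

Definition is_distr (T : finType) (d : {ffun T -> R}) : Prop :=
  (forall x, 0 <= d x) /\ \sum_x d x = 1.

Definition supp (T : finType) (d : {ffun T -> R}) : {set T} := [set x | d x != 0].

Variables S M : finType.

Record cgs := CGS {
  Gam1 : S -> {set M};
  Gam2 : S -> {set M};
  delta : S -> M -> M -> {ffun S -> R} }.

Definition cgs_wf (G : cgs) : Prop :=
  (forall s, (0 < #|Gam1 G s|)%N) /\ (forall s, (0 < #|Gam2 G s|)%N) /\
  (forall s a b, a \in Gam1 G s -> b \in Gam2 G s -> is_distr (delta G s a b)).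

Definition Dest (G : cgs) s a b : {set S} := supp (delta G s a b).

Definition sel1 (G : cgs) s (xi : {ffun M -> R}) : Prop :=
  is_distr xi /\ forall a, a \notin Gam1 G s -> xi a = 0.
Definition sel2 (G : cgs) s (xi : {ffun M -> R}) : Prop :=
  is_distr xi /\ forall b, b \notin Gam2 G s -> xi b = 0.

Definition valuation (v : S -> R) : Prop := forall s, 0 <= v s <= 1.

Definition Pre (G : cgs) (v : S -> R) s (xi1 xi2 : {ffun M -> R}) : R :=
  \sum_a \sum_b \sum_t v t * delta G s a b t * xi1 a * xi2 b.

Definition Pre_b (G : cgs) (v : S -> R) s (xi1 : {ffun M -> R}) (b : M) : R :=
  \sum_a \sum_t v t * delta G s a b t * xi1 a.

Definition Pre1_sel (G : cgs) (v : S -> R) s (xi1 : {ffun M -> R}) : R :=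
  inf [set Pre G v s xi1 xi2 | xi2 in [set xi2 | sel2 G s xi2]]%classic.

Definition Pre1 (G : cgs) (v : S -> R) s : R :=
  sup [set Pre1_sel G v s xi1 | xi1 in [set xi1 | sel1 G s xi1]]%classic.

Definition OptSel (G : cgs) (v : S -> R) s (xi1 : {ffun M -> R}) : Prop :=
  sel1 G s xi1 /\ Pre1_sel G v s xi1 = Pre1 G v s.

Definition CountOpt (G : cgs) (v : S -> R) s (xi1 : {ffun M -> R}) : {set M} :=
  [set b in Gam2 G s | Pre_b G v s xi1 b == Pre1 G v s].

Definition OptSelCount (G : cgs) (v : S -> R) s (A B : {set M}) : Prop :=
  exists xi1, OptSel G v s xi1 /\ supp xi1 = A /\ CountOpt G v s xi1 = B.

(** Markov chain induced by a memoryless player-1 strategy pi1 and a pure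
    memoryless player-2 strategy pi2; safeN n s = probability that the
    first n+1 states of the play from s all lie in F. *)
Definition mc_step (G : cgs) (pi1 : S -> {ffun M -> R}) (pi2 : S -> M) s t : R :=
  \sum_a pi1 s a * delta G s a (pi2 s) t.

Fixpoint safeN (G : cgs) pi1 pi2 (F : {set S}) (n : nat) (s : S) : R :=
  match n with
  | 0 => (s \in F)%:R
  | n'.+1 => (s \in F)%:R * \sum_t mc_step G pi1 pi2 s t * safeN G pi1 pi2 F n' t
  end.

(** Pr_s^{pi1,pi2}(Safe F) = 1 (probability of the decreasing intersection of
    the events "first n steps in F"). *)
Definition prob_safe_one (G : cgs) pi1 pi2 (F : {set S}) (s : S) : Prop :=
  forall n, safeN G pi1 pi2 F n s = 1.

(* states: inl (inl s)        = player-1 state s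
           inl (inr (s,A,B))  = player-2 state (s,A,B)
           inr (s,A,b)        = random state (s,A,b)                  *)
Definition tbstate : finType :=
  ((S + (S * {set M} * {set M})) + (S * {set M} * M))%type.

Definition TB1 (s : S) : tbstate := inl (inl s).
Definition TB2 (s : S) (A B : {set M}) : tbstate := inl (inr (s, A, B)).
Definition TBR (s : S) (A : {set M}) (b : M) : tbstate := inr (s, A, b).

Definition tb_base (x : tbstate) : S :=
  match x with
  | inl (inl s) => s
  | inl (inr (s, _, _)) => s
  | inr (s, _, _) => s
  end.

Definition tbDest (G : cgs) s (A : {set M}) b : {set S} :=
  \bigcup_(a in A) Dest G s a b.

(** The states actually present in the turn-based game. *)
Definition tb_valid (G : cgs) v (x : tbstate) : Prop :=
  match x with
  | inl (inl s) => True
  | inl (inr (s, A, B)) => OptSelCount G v s A B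
  | inr (s, A, b) => exists B, OptSelCount G v s A B /\ b \in B
  end.

Definition tb_edge (G : cgs) v (x y : tbstate) : Prop :=
  match x, y with
  | inl (inl s), inl (inr (s', A, B)) => s' = s /\ OptSelCount G v s A B
  | inl (inr (s, A, B)), inr (s', A', b) =>
      OptSelCount G v s A B /\ s' = s /\ A' = A /\ b \in B
  | inr (s, A, b), inl (inl t) =>
      (exists B, OptSelCount G v s A B /\ b \in B) /\ t \in tbDest G s A b
  | _, _ => False
  end.

Definition is_p1 (x : tbstate) : bool :=
  if x is inl (inl _) then true else false.
Definition is_p2 (x : tbstate) : bool :=
  if x is inl (inr _) then true else false.

Definition Fbar (F : {set S}) : {set tbstate} := [set x | tb_base x \in F].

(** General (history-dependent, randomized) strategies in the turn-based game:
    given the history prefix and the current state, a distribution on states. *)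
Definition tbstrat := seq tbstate -> tbstate -> {ffun tbstate -> R}.

Definition legal_strat (G : cgs) v (owner : tbstate -> bool) (sg : tbstrat) : Prop :=
  forall h x, tb_valid G v x -> owner x ->
    is_distr (sg h x) /\ forall y, sg h x y != 0 -> tb_edge G v x y.

Definition tb_step (G : cgs) (s1 s2 : tbstrat) h (x y : tbstate) : R :=
  match x with
  | inl (inl _) => s1 h x y
  | inl (inr _) => s2 h x y
  | inr (s, A, b) =>
      match y with
      | inl (inl t) => if t \in tbDest G s A b then #|tbDest G s A b|%:R^-1 else 0
      | _ => 0
      end
  end.

(** Probability that the first n+1 states of the play (continuing history h
    from current state x) lie in Fbar. *)
Fixpoint tb_safeN (G : cgs) (s1 s2 : tbstrat) (Fb : {set tbstate}) (n : nat)
    (h : seq tbstate) (x : tbstate) : R :=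
  match n with
  | 0 => (x \in Fb)%:R
  | n'.+1 => (x \in Fb)%:R *
      \sum_y tb_step G s1 s2 h x y * tb_safeN G s1 s2 Fb n' (rcons h x) y
  end.

Definition tb_as_wins (G : cgs) v (F : {set S}) (s1 : tbstrat) (x : tbstate) : Prop :=
  forall s2, legal_strat G v is_p2 s2 ->
    forall n, tb_safeN G s1 s2 (Fbar F) n [::] x = 1.

Definition tb_as_winning_state (G : cgs) v F (x : tbstate) : Prop :=
  tb_valid G v x /\
  exists s1, legal_strat G v is_p1 s1 /\ tb_as_wins G v F s1 x.

Definition pure_ml (f : tbstate -> tbstate) : tbstrat :=
  fun _ x => [ffun y => (y == f x)%:R].

Definition legal_pure_ml1 (G : cgs) v (f : tbstate -> tbstate) : Prop :=
  forall s, tb_edge G v (TB1 s) (f (TB1 s)).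

End CGS.
Arguments TB1 {S M} s.
Arguments pure_ml {R S M} f.
Arguments tb_base {S M} x.

(* Main.v *)
Require Import Defs.
From HB Require Import structures.
From mathcomp Require Import all_boot all_order all_algebra.
From mathcomp Require Import classical_sets reals.
Set Implicit Arguments. Unset Strict Implicit. Unset Printing Implicit Defensive.
Import Order.TTheory GRing.Theory Num.Theory.
Local Open Scope ring_scope.

Section H.
Variables (R : realType) (S M : finType) (G : cgs R S M) (v : S -> R).

Lemma Pre_sum s xi1 xi2 :
  Pre G v s xi1 xi2 = \sum_b xi2 b * Pre_b G v s xi1 b.
Proof.
rewrite /Pre /Pre_b exchange_big /=; apply: eq_bigr => b _.
rewrite big_distrr /=; apply: eq_bigr => a _.
rewrite big_distrr /=; apply: eq_bigr => t _.
by rewrite mulrC.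
Qed.

Lemma CountOpt_nonempty s xi1 : cgs_wf G -> OptSel G v s xi1 ->
  exists b, b \in CountOpt G v s xi1.
Proof.
move=> [_ [wf2 _]] [_ Hopt].
have := wf2 s; rewrite card_gt0 => /set0Pn [b0 Hb0].
case: (@arg_minP _ _ M b0 (mem (Gam2 G s)) (Pre_b G v s xi1) Hb0) => b Hb0b Hmin.
have Hb : b \in Gam2 G s := Hb0b.
exists b; rewrite inE; apply/andP; split; first exact: Hb.
rewrite -Hopt; apply/eqP.
rewrite /Pre1_sel.
set E := [set _ | _ in _]%classic.
have lbE : lbound E (Pre_b G v s xi1 b).
  move=> _ [xi2 [[xi2p xi2s] xi2o] <-]; rewrite Pre_sum.
  rewrite -[leLHS]mul1r -xi2s big_distrl /=; apply: ler_sum => c _.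
  case: (boolP (c \in Gam2 G s)) => Hc.
    apply: (ler_wpM2l (xi2p c)); exact: Hmin.
  by rewrite xi2o // !mul0r.
have Eb : E (Pre_b G v s xi1 b).
  exists [ffun c => (c == b)%:R].
    split; first split.
    - by move=> c; rewrite ffunE ler0n.
    - rewrite (bigD1 b) //= ffunE eqxx big1 ?addr0 // => c /negbTE Hc.
      by rewrite ffunE Hc.
    - by move=> c Hc; rewrite ffunE; case: eqP => // Ecb; rewrite Ecb Hb in Hc.
  rewrite Pre_sum (bigD1 b) //= ffunE eqxx mul1r big1 ?addr0 // => c /negbTE Hc.
  by rewrite ffunE Hc mul0r.
apply/le_anti/andP; split.
  by apply: lb_le_inf => //; exists (Pre_b G v s xi1 b).
by apply: (ge_inf _ Eb); exists (Pre_b G v s xi1 b).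
Qed.

Lemma sum_pm (T : finType) (z : T) (g : T -> R) :
  \sum_y (y == z)%:R * g y = g z.
Proof.
rewrite (bigD1 z) //= eqxx mul1r big1 ?addr0 // => y /negbTE ->.
by rewrite mul0r.
Qed.

Lemma edge_valid x y : tb_edge G v x y -> tb_valid G v y.
Proof.
case: x => [[s|[[s A] B]]|[[s A] b]]; case: y => [[t|[[t A' ] B']]|[[t A'] b']] //=.
- by case=> -> .
- by case=> H [-> [-> Hb]]; exists B.
Qed.

Lemma sum_rand (s1 s2 : tbstrat R S M) h s A b (g : tbstate S M -> R) :
  \sum_y tb_step G s1 s2 h (TBR s A b) y * g y =
  \sum_(t in tbDest G s A b) #|tbDest G s A b|%:R^-1 * g (TB1 t).
Proof.
rewrite big_sumType /= big_sumType /=.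
rewrite [X in _ + X + _]big1 // ?[X in _ + X]big1 // ?addr0.
- rewrite [RHS]big_mkcond; apply: eq_bigr => t _ /=; case: ifP => _ //; exact: mul0r.
- by move=> y _; exact: mul0r.
- by move=> y _; exact: mul0r.
Qed.

Lemma step_props (s1 s2 : tbstrat R S M) h x :
  legal_strat G v (@is_p1 S M) s1 -> legal_strat G v (@is_p2 S M) s2 ->
  tb_valid G v x ->
  (forall y, 0 <= tb_step G s1 s2 h x y) /\ (forall y, tb_step G s1 s2 h x y != 0 -> tb_valid G v y) /\ \sum_y tb_step G s1 s2 h x y <= 1.
Proof.
move=> L1 L2 Vx.
case: x Vx => [[s|[[s A] B]]|[[s A] b]] Vx.
- have [[D0 D1] E] := L1 h _ Vx erefl.
  split; first by move=> y; exact: D0.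
  split; last by rewrite /= D1.
  by move=> y /E; exact: edge_valid.
- have [[D0 D1] E] := L2 h _ Vx erefl.
  split; first by move=> y; exact: D0.
  split; last by rewrite /= D1.
  by move=> y /E; exact: edge_valid.
- split.
    by case=> [[t|[[t A' ] B']]|[[t A'] b']] //=; case: ifP => // _; rewrite invr_ge0 ler0n.
  split; first by case=> [[t|[[t A' ] B']]|[[t A'] b']] //=; rewrite eqxx.
  have := sum_rand s1 s2 h s A b (fun _ => 1).
  under eq_bigr do rewrite mulr1.
  move=> ->; under eq_bigr do rewrite mulr1.
  rewrite sumr_const.
  case: (posnP #|tbDest G s A b|) => [->|Hp]; first by rewrite mulr0n ler01.
  set n := #|tbDest G s A b|; set c := (n%:R)^-1; rewrite -mulr_natr /c mulVf // pnatr_eq0 -lt0n.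
  done.
Qed.

Lemma safe_bound (s1 s2 : tbstrat R S M) Fb n h x :
  legal_strat G v (@is_p1 S M) s1 -> legal_strat G v (@is_p2 S M) s2 ->
  tb_valid G v x -> 0 <= tb_safeN G s1 s2 Fb n h x <= 1.
Proof.
move=> L1 L2; elim: n h x => [|n IH] h x Vx /=.
  by case: (x \in Fb); rewrite ?lexx ?ler01.
have [P0 [PV PS]] := step_props h L1 L2 Vx.
have H0 : 0 <= \sum_y tb_step G s1 s2 h x y * tb_safeN G s1 s2 Fb n (rcons h x) y.
  apply: sumr_ge0 => y _; case: (eqVneq (tb_step G s1 s2 h x y) 0) => [->|Hy].
    by rewrite mul0r.
  by apply: mulr_ge0 => //; have /andP[] := IH (rcons h x) y (PV y Hy).
have H1 : \sum_y tb_step G s1 s2 h x y * tb_safeN G s1 s2 Fb n (rcons h x) y <= 1.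
  apply: le_trans PS; apply: ler_sum => y _.
  case: (eqVneq (tb_step G s1 s2 h x y) 0) => [->|Hy]; first by rewrite mul0r.
  have /andP[_ ?] := IH (rcons h x) y (PV y Hy).
  by rewrite -[leRHS]mulr1; apply: ler_wpM2l.
case: (x \in Fb); rewrite ?mul1r ?mul0r ?lexx ?ler01 //.
by rewrite H0 H1.
Qed.

Definition shift_strat (p : seq (tbstate S M)) (x0 z : tbstate S M)
  (s2 : tbstrat R S M) : tbstrat R S M :=
  fun h x => if take (size p) h == p then s2 (drop (size p) h) x
    else if x == x0 then [ffun y => (y == z)%:R] else s2 h x.

Lemma shift_safe f s2 p x0 z Fb n h x :
  tb_safeN G (pure_ml f) (shift_strat p x0 z s2) Fb n (p ++ h) x =
  tb_safeN G (pure_ml f) s2 Fb n h x.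
Proof.
elim: n h x => [|n IH] h x //=.
congr (_ * _); apply: eq_bigr => y _; rewrite rcons_cat IH; congr (_ * _).
case: x => [[s|[[s A] B]]|[[s A] b]] //=.
by rewrite /shift_strat (take_size_cat _ (erefl _)) eqxx (drop_size_cat _ (erefl _)).
Qed.

Lemma pm_distr (T : finType) (z : T) : is_distr [ffun y => (y == z)%:R : R].
Proof.
split; first by move=> y; rewrite ffunE ler0n.
rewrite (bigD1 z) //= ffunE eqxx big1 ?addr0 // => y /negbTE Hy.
by rewrite ffunE Hy.
Qed.

Lemma shift_legal p x0 z s2 : legal_strat G v (@is_p2 S M) s2 ->
  tb_edge G v x0 z -> legal_strat G v (@is_p2 S M) (shift_strat p x0 z s2).
Proof.
move=> L2 E h x Vx P2; rewrite /shift_strat.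
case: ifP => _; first exact: L2.
case: eqP => [->|_]; last exact: L2.
split; first exact: pm_distr.
move=> y; rewrite ffunE; case: (eqVneq y z) => [-> _|Hne]; first exact: E.
by rewrite eqxx.
Qed.

Lemma tb_safeN_S s1 s2 Fb n h x :
  tb_safeN G s1 s2 Fb n.+1 h x = (x \in Fb)%:R *
   \sum_y tb_step G s1 s2 h x y * tb_safeN G s1 s2 Fb n (rcons h x) y.
Proof. by []. Qed.

Lemma mc_sum (pi1 : S -> {ffun M -> R}) pi2 s : cgs_wf G -> sel1 G s (pi1 s) ->
  pi2 s \in Gam2 G s -> \sum_t mc_step G pi1 pi2 s t = 1.
Proof.
move=> [_ [_ wf]] [[_ S1] S0] H2.
rewrite /mc_step exchange_big /= -[RHS]S1; apply: eq_bigr => a _.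
rewrite -big_distrr /=.
case: (boolP (a \in Gam1 G s)) => Ha.
  by have [_ ->] := wf s a (pi2 s) Ha H2; rewrite mulr1.
by rewrite S0 // mul0r.
Qed.
End H.

Unset Implicit Arguments.
Theorem lemma12 (R : realType) (S M : finType) (G : cgs R S M)
    (F : {set S}) (v : S -> R)
    (Abar : tbstate S M -> Prop) (pi1bar : tbstate S M -> tbstate S M)
    (pi1 : S -> {ffun M -> R}) (pi2 : S -> M) :
  cgs_wf G -> valuation v ->
  (forall x, Abar x <-> tb_as_winning_state G v F x) ->
  legal_pure_ml1 G v pi1bar ->
  (forall x, Abar x -> tb_as_wins G v F (pure_ml pi1bar) x) ->
  (forall s, sel1 G s (pi1 s)) ->
  (forall s, Abar (TB1 s) -> forall A B, pi1bar (TB1 s) = TB2 s A B ->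
     OptSel G v s (pi1 s) /\ supp (pi1 s) = A /\ CountOpt G v s (pi1 s) = B) ->
  (forall s, pi2 s \in Gam2 G s) ->
  (forall s, Abar (TB1 s) -> pi2 s \in CountOpt G v s (pi1 s)) ->
  forall s, Abar (TB1 s) -> prob_safe_one G pi1 pi2 F s.
Proof.
move=> wf _ HA Lpi Hwin Hsel Hopt H2in H2co.
have L1 : legal_strat G v (@is_p1 S M) (pure_ml pi1bar).
  move=> h [[s|//]|//] _ _; split; first exact: pm_distr.
  by move=> y; rewrite ffunE; case: (eqVneq y (pi1bar (TB1 s))) => [-> _|Hne];
    [exact: Lpi | rewrite eqxx].
pose s2b : tbstrat R S M := fun h x => match x with
  | inl (inr (s, A, B)) =>
      if [pick b in B] is Some b then [ffun y => (y == TBR s A b)%:R]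
      else [ffun => 0]
  | _ => [ffun => 0] end.
have L2b : legal_strat G v (@is_p2 S M) s2b.
  move=> h [[//|[[s A] B]]|//] /= Vx _.
  have [xi1 [Ho [_ HB]]] := Vx.
  have [b Hb] := CountOpt_nonempty wf Ho; rewrite HB in Hb.
  case: pickP => [b' Hb'|Hn]; last by rewrite Hn in Hb.
  split; first exact: pm_distr.
  move=> y; rewrite ffunE; case: (eqVneq y (TBR s A b')) => [-> _|Hne]; last by rewrite eqxx.
  by split.
have inv : forall s, Abar (TB1 s) ->
    s \in F /\ forall t, mc_step G pi1 pi2 s t != 0 -> Abar (TB1 t).
  move=> s As.
  have sF : s \in F.
    have := Hwin _ As s2b L2b 0%N; rewrite /= /Fbar inE /=.
    by case: (s \in F) => //= /eqP; rewrite eq_sym oner_eq0.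
  split=> // t Hmc.
  have Ed := Lpi s.
  case Ep : (pi1bar (TB1 s)) Ed => [[s'|[[s' A] B]]|[[s' A] b]] //= [Es' OSC].
  subst s'.
  have [Os [SA CB]] := Hopt s As A B Ep.
  have H2B : pi2 s \in B by rewrite -CB; exact: H2co.
  have tD : t \in tbDest G s A (pi2 s).
    case: (boolP [exists a, pi1 s a * delta G s a (pi2 s) t != 0]) => [/existsP [a Ha]|/existsPn Hn].
      move: Ha; rewrite mulf_eq0 negb_or => /andP [Ha1 Ha2].
      apply/bigcupP; exists a; first by rewrite -SA inE.
      by rewrite /Dest /supp inE.
    move: Hmc; rewrite /mc_step big1 ?eqxx // => a _.
    by apply/eqP; rewrite -[_ == _]negbK; apply: Hn.
  apply/HA; split=> //; exists (pure_ml pi1bar); split=> // s2 L2 n.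
  set b := pi2 s.
  set p := [:: TB1 s; TB2 s A B; TBR s A b].
  set s2' := shift_strat p (TB2 s A B) (TBR s A b) s2.
  have L2' : legal_strat G v (@is_p2 S M) s2' by apply: shift_legal.
  have W := Hwin _ As s2' L2' n.+3.
  rewrite tb_safeN_S (eq_bigr (fun y => (y == TB2 s A B)%:R *
     tb_safeN G (pure_ml pi1bar) s2' (Fbar M F) n.+2 [:: TB1 s] y)) in W; last first.
    by move=> y _; rewrite /= ffunE Ep.
  rewrite sum_pm tb_safeN_S (eq_bigr (fun y => (y == TBR s A b)%:R *
     tb_safeN G (pure_ml pi1bar) s2' (Fbar M F) n.+1 [:: TB1 s; TB2 s A B] y)) in W; last first.
    move=> y _; rewrite /= /s2' /shift_strat /=.
    have -> : ([:: TB1 s] == p) = false by rewrite /p eqseq_cons eqxx.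
    by rewrite eqxx ffunE.
  rewrite sum_pm tb_safeN_S sum_rand /= in W.
  rewrite !inE /= sF !mul1r in W.
  set D := tbDest G s A b in W tD.
  set g := fun t => tb_safeN G (pure_ml pi1bar) s2' (Fbar M F) n p (TB1 t).
  have gb : forall t, g t <= 1.
    by move=> t'; have /andP [] := safe_bound (Fbar M F) n p L1 L2' (I : tb_valid G v (TB1 t')).
  have Dpos : (0 < #|D|)%N by apply/card_gt0P; exists t.
  have c0 : #|D|%:R^-1 != 0 :> R by rewrite invr_eq0 pnatr_eq0 -lt0n.
  have sc : \sum_(t in D) #|D|%:R^-1 = 1 :> R.
    rewrite sumr_const; set c := (#|D|%:R^-1 : R); rewrite -mulr_natr /c mulVf //.
    by rewrite pnatr_eq0 -lt0n.
  have Z : \sum_(t in D) #|D|%:R^-1 * (1 - g t) = 0.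
    under eq_bigr do rewrite mulrBr mulr1.
    by rewrite sumrB sc W subrr.
  have H0 : forall i, i \in D -> 0 <= #|D|%:R^-1 * (1 - g i).
    by move=> i _; rewrite mulr_ge0 // ?invr_ge0 ?ler0n // subr_ge0.
  have /eqP := psumr_eq0P H0 Z tD.
  rewrite mulf_eq0 (negbTE c0) /= subr_eq0 => /eqP H.
  by rewrite H /g -[p]cats0 /s2' shift_safe.
move=> s As n; elim: n s As => [|n IH] s As.
  by rewrite /= (inv s As).1.
rewrite /= (inv s As).1 mul1r -[RHS](mc_sum wf (Hsel s) (H2in s)).
apply: eq_bigr => t _.
case: (eqVneq (mc_step G pi1 pi2 s t) 0) => [->|Hne]; first by rewrite !mul0r.
by rewrite IH ?mulr1 //; exact: (inv s As).2 t Hne.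
Qed.
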